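(* For every integer $m\ge1$: $D_{-m}(C(t);n)=0$ for $1\le n\le m$, and for $n\ge m+1$ $$D_{-m}(C(t);n)=(-1)^{\binom{m+1}{2}}\,t^{\,n-m-1}\,D_{m+1}(C(t);n-m-1)$$ as an identity of polynomials in $t$.
   Context: The Narayana polynomials are $C_0(t)=1$ and $C_n(t)=\sum_{k=0}^{n-1}\binom{n-1}{k}\binom{n}{k}\frac{1}{k+1}t^k$ for $n\ge1$; they are extended by $C_n(t)=0$ for $n<0$. Their generating function $\sum_{n\ge0}C_n(t)x^n$ equals $\frac{1+x(t-1)-\sqrt{1-2x(t+1)+x^2(t-1)^2}}{2tx}$. For $m\in\mathbb Z$ and $n\ge0$, $D_m(C(t);n)=\det(C_{i+j+m}(t))_{i,j=0}^{n-1}$, the $0\times0$ determinant being $1$. *)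

(* Defs.v *)
From HB Require Import structures.
From mathcomp Require Import all_boot all_order all_algebra.
Set Implicit Arguments. Unset Strict Implicit. Unset Printing Implicit Defensive.
Import Order.TTheory GRing.Theory Num.Theory.
Local Open Scope ring_scope.

Definition Narayana (n : int) : {poly rat} :=
  match n with
  | Posz 0 => 1
  | Posz n'.+1 =>
      \sum_(k < n'.+1)
        ((('C(n', k) * 'C(n'.+1, k))%:R / (k.+1)%:R : rat) *: 'X^k)
  | Negz _ => 0
  end.

Definition HankelD (m : int) (n : nat) : {poly rat} :=
  \det (\matrix_(i < n, j < n) Narayana ((i + j)%:Z + m)).

(* Main.v *)
Require Import Defs.
From HB Require Import structures.
From mathcomp Require Import all_boot all_order all_algebra.
From mathcomp Require Import all_fingroup.
From mathcomp Require Import zify ring lra.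
Import GRing.Theory Num.Theory.
Local Open Scope ring_scope.

Definition cn (n : nat) : {poly rat} := Narayana n%:Z.
Definition ifac (z : int) : rat :=
  match z with Posz k => (k`!%:R)^-1 | Negz _ => 0 end.

Lemma ifac1 (z : int) : ifac (z - 1) = z%:~R * ifac z.
Proof.
case: z => [[|k]|k] /=.
- by rewrite mul0r.
- rewrite /= subn1 /= factS natrM invfM mulrA.
  by rewrite mulfV ?mul1r // pnatr_eq0.
- by rewrite /= mulr0.
Qed.

Definition A (n : nat) (k : int) : rat :=
  (n.-1)`!%:R * n`!%:R * ifac k * ifac (k + 1) * ifac (n.-1%:Z - k)
  * ifac (n%:Z - k).

Lemma coef_cn (n k : nat) : (cn n.+1)`_k = A n.+1 k.
Proof.
rewrite /cn /Narayana coef_sum.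
under eq_bigr => j _ do rewrite coefZ coefXn.
rewrite /A /=.
case: (ltnP k n.+1) => hk.
- rewrite (bigD1 (Ordinal hk)) //= eqxx mulr1 big1 ?addr0; last first.
    move=> j hj; rewrite (_ : (k == j :> nat) = false) ?mulr0 //.
    by apply/eqP => e; move/eqP: hj; apply; apply/val_inj; rewrite /= e.
  rewrite (_ : (n%:Z - k%:Z) = (n - k)%N :> int); last by lia.
  rewrite (_ : (n.+1%:Z - k%:Z) = (n.+1 - k)%N :> int); last by lia.
  rewrite /ifac addn1.
  have h1 := bin_fact (n:=n) (m:=k) (ltac:(lia)).
  have h2 := bin_fact (n:=n.+1) (m:=k) (ltac:(lia)).
  rewrite -h1 -h2 factS !natrM.
  have f1 : (k`!%:R : rat) != 0 by rewrite pnatr_eq0 -lt0n fact_gt0.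
  have f2 : ((n-k)`!%:R : rat) != 0 by rewrite pnatr_eq0 -lt0n fact_gt0.
  have f3 : ((n.+1-k)`!%:R : rat) != 0 by rewrite pnatr_eq0 -lt0n fact_gt0.
  have f4 : (k.+1%:R : rat) != 0 by rewrite pnatr_eq0.
  field. by rewrite f1 f2 f3 nat1r f4.
- rewrite big1; last first.
    move=> j _; rewrite (_ : (k == j) = false) ?mulr0 //.
    by apply/negbTE; apply/eqP => hkj; have := ltn_ord j; lia.
  rewrite (_ : (n%:Z - k%:Z) = Negz (k - n.+1)); last by lia.
  by rewrite /= !mulr0 mul0r.
Qed.

Lemma ifac_sh (a b : int) : a = b - 1 -> ifac a = b%:~R * ifac b.
Proof. by move->; apply: ifac1. Qed.
Lemma ifac_eq (a b : int) : a = b -> ifac a = ifac b.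
Proof. by move->. Qed.

Definition EE (p : nat) (z : int) : rat :=
  p`!%:R * (p.+1)`!%:R * (z + 1)%:~R * (p.+3%:Z - z)%:~R *
  ifac (z + 1) ^+ 2 * ifac (p.+3%:Z - z) ^+ 2.

Ltac lo z := rewrite (@ifac_sh z (z + 1)); last lia.
Ltac hi p z := rewrite (@ifac_sh (p.+2%:Z - z) (p.+3%:Z - z)); last lia.
Ltac hi1 p z := rewrite (@ifac_sh (p.+1%:Z - z) (p.+2%:Z - z)); last lia.
Ltac hi0 p z := rewrite (@ifac_sh (p%:Z - z) (p.+1%:Z - z)); last lia.

Lemma LA3 p z : A p.+3 z = ((p.+1 * p.+2 * p.+2 * p.+3)%:R) * EE p z.
Proof.
rewrite /A /EE /=. lo z. hi p z. rewrite !factS !natrM. ring.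
Qed.

Lemma LA2 p z : A p.+2 z = ((p.+1 * p.+2)%:R * ((p.+2%:Z - z) * (p.+3%:Z - z))%:~R) * EE p z.
Proof.
rewrite /A /EE /=. lo z. hi1 p z. hi p z. rewrite !factS !natrM. ring.
Qed.

Lemma LA2' p z : A p.+2 (z - 1) = ((p.+1 * p.+2)%:R * (z * (z + 1))%:~R) * EE p z.
Proof.
rewrite /A /EE /=.
rewrite (@ifac_eq (z - 1 + 1) z); last lia.
rewrite (@ifac_eq (p.+1%:Z - (z - 1)) (p.+2%:Z - z)); last lia.
rewrite (@ifac_eq (p.+2%:Z - (z - 1)) (p.+3%:Z - z)); last lia.
lo (z - 1). rewrite (_ : z - 1 + 1 = z); last lia. lo z. hi p z.
rewrite !factS !natrM. ring.
Qed.

Lemma LA1 p z : A p.+1 z =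
  ((p.+1%:Z - z) * (p.+2%:Z - z) * (p.+2%:Z - z) * (p.+3%:Z - z))%:~R * EE p z.
Proof.
rewrite /A /EE /=. lo z. hi0 p z. hi1 p z. hi p z. rewrite !factS !natrM. ring.
Qed.

Lemma LA1' p z : A p.+1 (z - 1) =
  (z * (z + 1) * (p.+2%:Z - z) * (p.+3%:Z - z))%:~R * EE p z.
Proof.
rewrite /A /EE /=.
rewrite (@ifac_eq (z - 1 + 1) z); last lia.
rewrite (@ifac_eq (p%:Z - (z - 1)) (p.+1%:Z - z)); last lia.
rewrite (@ifac_eq (p.+1%:Z - (z - 1)) (p.+2%:Z - z)); last lia.
lo (z - 1). rewrite (_ : z - 1 + 1 = z); last lia. lo z. hi1 p z. hi p z.
rewrite !factS !natrM. ring.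
Qed.

Lemma LA1'' p z : A p.+1 (z - 2) =
  ((z - 1) * z * z * (z + 1))%:~R * EE p z.
Proof.
rewrite /A /EE /=.
rewrite (@ifac_eq (z - 2) (z - 1 - 1)); last lia.
rewrite (@ifac_eq (z - 2 + 1) (z - 1)); last lia.
rewrite (@ifac_eq (p%:Z - (z - 2)) (p.+2%:Z - z)); last lia.
rewrite (@ifac_eq (p.+1%:Z - (z - 2)) (p.+3%:Z - z)); last lia.
lo (z - 1 - 1). rewrite (_ : z - 1 - 1 + 1 = z - 1); last lia.
lo (z - 1). rewrite (_ : z - 1 + 1 = z); last lia. lo z. hi p z.
rewrite !factS !natrM. ring.
Qed.

Lemma coefXc n k : ('X * cn n.+1)`_k = A n.+1 (k%:Z - 1).
Proof.
rewrite coefXM; case: k => [|k] /=.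
  by rewrite /A /= !mulr0 !mul0r.
by rewrite coef_cn (_ : (k.+1%:Z - 1) = k) //; lia.
Qed.

Lemma coefXXc n k : ('X * ('X * cn n.+1))`_k = A n.+1 (k%:Z - 2).
Proof.
rewrite coefXM; case: k => [|k] /=.
  by rewrite /A /= !mulr0 !mul0r.
by rewrite coefXc (_ : (k.+1%:Z - 2) = k%:Z - 1) //; lia.
Qed.

Lemma rec3 p : (p.+4)%:R *: cn p.+3 =
  (2 * p + 5)%:R *: (cn p.+2 + 'X * cn p.+2)
  - (p.+1)%:R *: (cn p.+1 - 2%:R *: ('X * cn p.+1) + 'X * ('X * cn p.+1)).
Proof.
apply/polyP => k.
rewrite !(coefZ, coefD, coefN, coefB) !coef_cn coefXc coefXXc coefXc.
rewrite LA3 LA2 LA2' LA1 LA1' LA1''.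
rewrite !natrM. ring.
Qed.

Notation R := {poly rat}.

Definition eqm (M : nat) (p q : {poly R}) := forall i, (i < M)%N -> p`_i = q`_i.

Lemma eqm_mull M (p q r : {poly R}) : eqm M p q -> eqm M (r * p) (r * q).
Proof.
move=> h i hi; rewrite !coefM; apply: eq_bigr => j _; rewrite h //.
by have := ltn_ord j; lia.
Qed.

Lemma natn0 (n : nat) : (n.+1%:R : R) != 0.
Proof. by rewrite -polyC_natr polyC_eq0 pnatr_eq0. Qed.

Lemma ode_uniq (D u : {poly R}) M : D`_0 = 1 -> u`_0 = 0 ->
  eqm M (D * u^`() - D^`() * u) 0 -> eqm M.+1 u 0.
Proof.
move=> hD hu h.
suff H : forall i, (i < M.+1)%N -> forall j, (j <= i)%N -> u`_j = 0.
  by move=> i hi; rewrite coef0; apply: (H i hi).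
elim=> [|i IH] hi j hj.
  by move: hj; rewrite leqn0 => /eqP ->.
have IH' : forall j, (j <= i)%N -> u`_j = 0 by apply: IH; lia.
case: (ltnP j i.+1) => hji; first by apply: IH'; lia.
have -> : j = i.+1 by lia.
have := h i (ltac:(lia)); rewrite coef0 coefB !coefM.
rewrite [X in X - _ = _]big_ord_recl.
rewrite [X in _ + X - _ = _]big1; last first.
  move=> k _; rewrite coef_deriv /= IH' ?mul0rn ?mulr0 //.
  by rewrite /bump /=; have := ltn_ord k; lia.
rewrite addr0 big1; last by
  move=> k _; rewrite IH' ?mulr0 //; have := ltn_ord k; lia.
rewrite subr0 coef_deriv hD mul1r subn0 => /eqP.
rewrite -mulr_natr mulf_eq0 (negbTE (natn0 i)) orbF.
by move/eqP.
Qed.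

Definition FF M : {poly R} := \poly_(i < M) cn i.
Definition PP : {poly R} := 1 + ('X - 1 : R)%:P * 'X.
Definition YY M : {poly R} := PP - (2%:R * 'X : R)%:P * ('X * FF M).
Definition d1 : R := - (2%:R * (1 + 'X)).
Definition d2 : R := (1 - 'X) ^+ 2.
Definition DD : {poly R} := 1 + d1%:P * 'X + d2%:P * ('X * 'X).
Definition QQ M : {poly R} := PP * FF M - ('X : R)%:P * 'X * FF M ^+ 2 - 1.

Lemma YD M : YY M ^+ 2 - DD = - (4%:R * 'X : R)%:P * ('X * QQ M).
Proof. rewrite /YY /DD /QQ /PP /d1 /d2. ring. Qed.

Lemma DD' : DD^`() = d1%:P + (2%:R * d2)%:P * 'X.
Proof. rewrite /DD !derivE. ring. Qed.

Lemma Eexp (q : {poly R}) : 2%:R * DD * q^`() - DD^`() * q =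
  2%:R * q^`() + (2%:R * d1)%:P * ('X * q^`()) + (2%:R * d2)%:P * ('X * ('X * q^`()))
  - d1%:P * q - (2%:R * d2)%:P * ('X * q).
Proof. rewrite DD' /DD. ring. Qed.

Lemma cn0 : cn 0 = 1. Proof. by []. Qed.

Lemma coefFF M j : (j < M)%N -> (FF M)`_j = cn j.
Proof. by move=> h; rewrite coef_poly h. Qed.

Lemma coefY0 M : (YY M)`_0 = 1.
Proof. rewrite /YY /PP !(coefB, coefD, coefN, coefCM, coefXM, coef1, coefX) /=. ring. Qed.

Lemma coefY1 M : (0 < M)%N -> (YY M)`_1 = - (1 + 'X).
Proof.
move=> h; rewrite /YY /PP !(coefB, coefD, coefN, coefCM, coefXM, coef1, coefX) /=.
rewrite coefFF // cn0. ring.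
Qed.

Lemma coefY2 M j : (j.+1 < M)%N -> (YY M)`_j.+2 = - (2%:R * 'X * cn j.+1).
Proof.
move=> h; rewrite /YY /PP !(coefB, coefD, coefN, coefCM, coefXM, coef1, coefX) /=.
rewrite coefFF //. ring.
Qed.

Lemma cn1 : cn 1 = 1.
Proof. by rewrite /cn /= big_ord1 /= div1r invr1 scale1r expr0. Qed.

Lemma cn2 : cn 2 = 1 + 'X.
Proof.
rewrite /cn /= big_ord_recr big_ord1 /=.
rewrite div1r invr1 scale1r expr0 expr1 divff ?scale1r //.
Qed.

Lemma helper (a b g k : R) : a = b -> g = k * (a - b) -> g = 0.
Proof. by move=> -> ->; rewrite subrr mulr0. Qed.

Lemma ode N : eqm N (2%:R * DD * (YY N.+1)^`() - DD^`() * YY N.+1) 0.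
Proof.
move=> i hi; rewrite Eexp coef0.
rewrite !(coefB, coefD, coefN, coefCM, coefXM, mulr_natl, coefMn, coef_deriv, coef1, coefX) /=.
case: i hi => [|[|[|i]]] hi /=; rewrite !coefFF; try lia.
- rewrite cn0 /d1. ring.
- rewrite cn0 cn1 /d1 /d2. ring.
- rewrite cn0 cn1 cn2 /d1 /d2. ring.
- have h := rec3 i; rewrite !scaler_nat in h.
  apply: (@helper _ _ _ (- (4%:R * 'X)) h). rewrite /d1 /d2. ring.
Qed.

Lemma DD0 : DD`_0 = 1.
Proof. by rewrite /DD !(coefD, coefCM, coefXM, coef1, coefX) /= !mulr0 !addr0. Qed.

Lemma X4_neq0 : (4%:R * 'X : R) != 0.
Proof. by rewrite mulf_eq0 negb_or (natn0 3) polyX_eq0. Qed.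

Lemma NR s : cn s.+1 = cn s + 'X * \sum_(a < s) cn a * cn (s - a).
Proof.
pose N := s.+2.
have U : eqm N.+1 (YY N.+1 ^+ 2 - DD) 0.
  apply: ode_uniq.
  - exact: DD0.
  - by rewrite coefB expr2 coef0M coefY0 DD0 mulr1 subrr.
  - have -> : DD * (YY N.+1 ^+ 2 - DD)^`() - DD^`() * (YY N.+1 ^+ 2 - DD)
        = YY N.+1 * (2%:R * DD * (YY N.+1)^`() - DD^`() * YY N.+1).
      rewrite derivB expr2 derivM. ring.
    move=> i hi; rewrite (eqm_mull _ _ _ (YY N.+1) (ode N) i hi).
    by rewrite mulr0.
have := U s.+2 (ltac:(lia)).
rewrite YD coef0 mulNr coefN coefCM coefXM /= => /eqP.
rewrite oppr_eq0 mulf_eq0 (negbTE X4_neq0) /= => /eqP.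
have -> : QQ N.+1 = FF N.+1 + ('X - 1 : R)%:P * ('X * FF N.+1)
   - ('X : R)%:P * ('X * (FF N.+1 * FF N.+1)) - 1.
  rewrite /QQ /PP. ring.
rewrite !(coefB, coefD, coefCM, coefXM, coef1) /= coefM big_ord_recr /=.
rewrite !coefFF; try lia.
rewrite (eq_bigr (fun a : 'I_s => cn a * cn (s - a))); last first.
  by move=> a _; rewrite !coefFF //; have := ltn_ord a; lia.
rewrite subnn cn0 mulr1 subr0 => h.
apply/subr0_eq; rewrite -[X in _ = X]h. ring.
Qed.

Definition g (s : nat) : R :=
  match s with 0 => 1 | 1 => -1 | s'.+1 => - ('X * cn s') end.

Lemma conv s : \sum_(a < s.+1) cn a * g (s - a) = (s == 0)%:R.
Proof.
case: s => [|s]; first by rewrite big_ord1 /= cn0 mulr1.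
rewrite big_ord_recr /= subnn mulr1 big_ord_recr /= subSnn mulrN1.
rewrite (eq_bigr (fun a : 'I_s => - 'X * (cn a * cn (s - a)))); last first.
  move=> a _ /=; have ha := ltn_ord a.
  rewrite (_ : (s.+1 - a = (s - a).+1)%N); last by lia.
  rewrite (_ : (s - a = (s - a).-1.+1)%N); last by lia.
  rewrite /= (_ : ((s - a).-1.+1 = s - a)%N); last by lia.
  ring.
rewrite -mulr_sumr NR. ring.
Qed.

Definition cz (a b : nat) : R := if (a < b)%N then 0 else cn (a - b).
Definition gz (a b : nat) : R := if (a < b)%N then 0 else g (a - b).

Lemma BW_entry n (i j : nat) : (i < n)%N -> (j < n)%N ->
  \sum_(k < n) cz (i + k) n.-1 * gz n.-1 (k + j) = (i == j)%:R.
Proof.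
move=> hi hj; destruct n as [|N]; first by [].
rewrite [N.+1.-1]/=.
rewrite -(big_mkord xpredT (fun k => cz (i + k) N * gz N (k + j))).
rewrite (big_cat_nat _ (n := (N - i)%N)) //=; last by lia.
rewrite big_nat big1 ?add0r; last first.
  by move=> k hk; rewrite /cz ifT ?mul0r //; move: hk; lia.
rewrite -{1}(add0n (N - i)%N) big_addn.
rewrite (_ : (N.+1 - (N - i) = i.+1)%N); last by lia.
rewrite (eq_bigr (fun a => cn a * gz N (a + (N - i) + j))); last first.
  move=> a _; rewrite /cz ifF; last by lia.
  by rewrite (_ : (i + (a + (N - i)) - N = a)%N) //; lia.
case: (ltnP i j) => hij.
  rewrite big1; last by move=> a _; rewrite /gz ifT ?mulr0 //; lia.
  by rewrite (_ : (i == j) = false) //; apply/negbTE; lia.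
rewrite (big_cat_nat _ (n := (i - j)%N.+1)) //=; last by lia.
have -> : \sum_((i - j).+1 <= a < i.+1) cn a * gz N (a + (N - i) + j) = 0.
  rewrite big_nat big1 //; move=> a ha; rewrite /gz ifT ?mulr0 //; move: ha; lia.
rewrite addr0.
rewrite big_mkord.
rewrite (eq_bigr (fun a : 'I_(i - j).+1 => cn a * g ((i - j) - a))); last first.
  move=> a _; have ha := ltn_ord a; rewrite /gz ifF; last by lia.
  by rewrite (_ : (N - (a + (N - i) + j) = i - j - a)%N) //; lia.
rewrite conv; congr (_%:R); apply/eqP/eqP; lia.
Qed.

Definition Bm K Nn : 'M[R]_(K + Nn) := \matrix_(i, j) cz (i + j) (K + Nn).-1.
Definition Wm K Nn : 'M[R]_(K + Nn) := \matrix_(i, j) gz (K + Nn).-1 (i + j).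

Lemma BW K Nn : Bm K Nn *m Wm K Nn = 1%:M.
Proof.
apply/matrixP => i j; rewrite !mxE.
under eq_bigr => k _ do rewrite !mxE.
by rewrite BW_entry.
Qed.

Lemma antitri (T : comNzRingType) n (M : 'M[T]_n) :
  (forall i j : 'I_n, (i + j < n.-1)%N -> M i j = 0) ->
  (forall i j : 'I_n, (i + j)%N = n.-1 -> M i j = 1) ->
  \det M = (-1) ^+ 'C(n, 2).
Proof.
elim: n M => [|n IH] M h0 h1; first by rewrite det_mx00.
rewrite (expand_det_row _ ord0) (bigD1 ord_max) //= big1 ?addr0; last first.
  move=> j hj; rewrite (h0 ord0 j) ?mul0r //=.
  have := ltn_ord j; have : (j : nat) != n.
    by apply/eqP => e; move/eqP: hj; apply; apply/val_inj.
  lia.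
rewrite h1 //= mul1r /cofactor IH.
- rewrite add0n -exprD binS bin1 addnC //.
- move=> i j hij; rewrite !mxE h0 //= /bump leq0n (leqNgt n j) (ltn_ord j) /=; move: hij; lia.
- move=> i j hij; rewrite !mxE h1 //= /bump leq0n (leqNgt n j) (ltn_ord j) /=; move: hij; have := ltn_ord i; lia.
Qed.

Lemma det_rev (T : comNzRingType) K (M : 'M[T]_K) :
  \det (\matrix_(i, j) M (rev_ord i) (rev_ord j)) = \det M.
Proof.
pose s := perm (@rev_ord_inj K).
have -> : \matrix_(i, j) M (rev_ord i) (rev_ord j) = row_perm s (col_perm s M).
  by apply/matrixP => i j; rewrite !mxE !permE.
rewrite row_permE col_permE !det_mulmx !det_perm odd_permV.
by rewrite mulrCA -expr2 sqrr_sign mulr1.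
Qed.

Lemma det_block K Nn :
  \det (drsubmx (Bm K Nn)) = \det (Bm K Nn) * \det (ulsubmx (Wm K Nn)).
Proof.
have e := BW K Nn.
rewrite -[Bm K Nn]submxK -[Wm K Nn]submxK mulmx_block scalar_mx_block in e.
have [e1 _ e3 _] := eq_block_mx e.
have : Bm K Nn *m block_mx (ulsubmx (Wm K Nn)) 0 (dlsubmx (Wm K Nn)) 1%:M
       = block_mx 1%:M (ursubmx (Bm K Nn)) 0 (drsubmx (Bm K Nn)).
  by rewrite -[Bm K Nn]submxK mulmx_block e1 e3 !mulmx0 !mulmx1 !add0r submxK.
move/(congr1 determinant); rewrite det_mulmx det_lblock det_ublock !det1.
by rewrite mulr1 mul1r => <-.
Qed.

Lemma detB K Nn : \det (Bm K Nn) = (-1) ^+ 'C(K + Nn, 2).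
Proof.
apply: antitri => i j h; rewrite mxE /cz.
- by rewrite ifT.
- by rewrite ifF ?h ?subnn //; lia.
Qed.

Lemma Nar_sub (a b : nat) : Narayana (a%:Z - b%:Z) = cz a b.
Proof.
rewrite /cz; case: (ltnP a b) => h.
- by rewrite (_ : a%:Z - b%:Z = Negz (b - a).-1) //; lia.
- by rewrite (_ : a%:Z - b%:Z = Posz (a - b)) //; lia.
Qed.

Lemma Nar_neg (z : int) : z < 0 -> Narayana z = 0.
Proof. by case: z. Qed.

Lemma bin2D a b : 'C(a + b, 2) = ('C(a, 2) + 'C(b, 2) + a * b)%N.
Proof.
elim: a => [|a IH]; first by rewrite add0n mul0n addn0.
rewrite addSn binS bin1 IH binS bin1 mulSn. lia.
Qed.

Lemma bin2x K : (2 * 'C(K, 2) + K = K * K)%N.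
Proof.
elim: K => [|K IH] //.
rewrite binS bin1. nia.
Qed.

Lemma ulW K m Nn : Nn = (K + m.+1)%N ->
  ulsubmx (Wm K Nn) = (- 'X) *:
    \matrix_(i, j) (\matrix_(i0 < K, j0 < K) cn (i0 + j0 + m.+1)) (rev_ord i) (rev_ord j).
Proof.
move=> hN; apply/matrixP => i j; rewrite !mxE /gz /=.
have hi := ltn_ord i; have hj := ltn_ord j.
rewrite ifF; last by lia.
rewrite (_ : ((K + Nn).-1 - (i + j) = ((K + Nn).-1 - (i + j) - 2).+2)%N); last by lia.
rewrite /= (_ : (((K + Nn).-1 - (i + j) - 2).+1 = K - i.+1 + (K - j.+1) + m.+1)%N); last by lia.
by rewrite mulNr.
Qed.

Theorem theorem8 (m : nat) : (1 <= m)%N ->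
  (forall n : nat, (1 <= n <= m)%N -> HankelD (- (m%:Z)) n = 0) /\
  (forall n : nat, (m.+1 <= n)%N ->
     HankelD (- (m%:Z)) n =
       (-1) ^+ 'C(m.+1, 2) * 'X^(n - m.+1) * HankelD (m.+1)%:Z (n - m.+1)).
Proof.
move=> hm; split.
  move=> n /andP [h1 h2]; rewrite /HankelD.
  destruct n as [|n]; first by [].
  rewrite (expand_det_row _ ord0) big1 // => j _.
  rewrite mxE Nar_neg ?mul0r //; have := ltn_ord j; simpl; lia.
move=> n hn.
set K := (n - m.+1)%N.
have hN : n = (K + m.+1)%N by rewrite /K; lia.
have eA : \matrix_(i < n, j < n) Narayana ((i + j)%:Z + - m%:Z) = drsubmx (Bm K n).
  apply/matrixP => i j; rewrite !mxE -Nar_sub /=; congr Narayana.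
  rewrite -subn1; move: hN; lia.
have eH : \matrix_(i0 < K, j0 < K) cn (i0 + j0 + m.+1)
    = \matrix_(i < K, j < K) Narayana ((i + j)%:Z + (m.+1)%:Z).
  by apply/matrixP => i j; rewrite !mxE.
rewrite /HankelD eA det_block detB (ulW _ _ _ hN) detZ det_rev eH.
set H := \det _.
have e : ('C(K + n, 2) + K = 'C(m.+1, 2) + 2 * ('C(K, 2) + K * m.+1 + 'C(K.+1, 2)))%N.
  rewrite hN !bin2D !binS !bin1. have := bin2x K. nia.
have s2 : (-1) ^+ 2 = 1 :> R by rewrite expr2 mulN1r opprK.
by rewrite [(- 'X) ^+ K]exprNn !mulrA -exprD e exprD exprM s2 expr1n mulr1.
Qed.
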